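(* Let $\alpha,\beta,d>0$ and $f$ as in the context. The only nonnegative, bounded stationary solutions $(v_j,\rho_j)_{j\in\mathbb{Z}}$ of the system described in the context are $(v_j,\rho_j)\equiv(0,0)$ for all $j$ and $(v_j,\rho_j)\equiv(\beta/\alpha,1)$ for all $j$ (i.e. $v_j(x)=\beta/\alpha$ for all $x\in[0,1]$ and $\rho_j=1$).
   Context: $f\in\mathscr{C}^1([0,1])$ satisfies $f(0)=f(1)=0$ and $0<f(u)\le f'(0)u$ for $u\in(0,1)$, extended to a locally Lipschitz function on $\mathbb{R}$ negative on $\mathbb{R}\setminus[0,1]$. A stationary solution is a family $(v_j,\rho_j)_{j\in\mathbb{Z}}$ with $v_j\in\mathscr{C}^2([0,1])$ and $\rho_j\in\mathbb{R}$ such that for all $j\in\mathbb{Z}$: $d\,v_j''(x)=0$ for $x\in(0,1)$; $0=f(\rho_j)+\alpha(v_j(0)+v_{j-1}(1))-2\beta\rho_j$; $-d\,v_j'(0)+\alpha v_j(0)=\beta\rho_j$; $d\,v_j'(1)+\alpha v_j(1)=\beta\rho_{j+1}$. Nonnegative and bounded means $v_j\ge0$, $\rho_j\ge0$ and $\sup_{j,x}|v_j(x)|+\sup_j|\rho_j|<\infty$. *)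

(* Defs.v *)
From Stdlib Require Import Reals ZArith.
Open Scope R_scope.

Definition deriv_on01 (g g' : R -> R) : Prop :=
  forall x, 0 <= x <= 1 ->
  forall eps, 0 < eps -> exists delta, 0 < delta /\
    forall y, 0 <= y <= 1 -> y <> x -> Rabs (y - x) < delta ->
      Rabs ((g y - g x) / (y - x) - g' x) < eps.

Definition cont_on01 (g : R -> R) : Prop :=
  forall x, 0 <= x <= 1 ->
  forall eps, 0 < eps -> exists delta, 0 < delta /\
    forall y, 0 <= y <= 1 -> Rabs (y - x) < delta -> Rabs (g y - g x) < eps.

Definition C1_on01 (g g' : R -> R) : Prop := deriv_on01 g g' /\ cont_on01 g'.

Definition C2_on01 (g g' g'' : R -> R) : Prop :=
  deriv_on01 g g' /\ deriv_on01 g' g'' /\ cont_on01 g''.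

Definition locally_lipschitz (f : R -> R) : Prop :=
  forall a b, exists L, forall x y, a <= x <= b -> a <= y <= b ->
    Rabs (f x - f y) <= L * Rabs (x - y).

Definition admissible_f (f f' : R -> R) : Prop :=
  C1_on01 f f' /\ f 0 = 0 /\ f 1 = 0 /\
  (forall u, 0 < u < 1 -> 0 < f u /\ f u <= f' 0 * u) /\
  locally_lipschitz f /\
  (forall u, (u < 0 \/ 1 < u) -> f u < 0).

Definition stationary_solution (f : R -> R) (alpha beta d : R)
  (v v' v'' : Z -> R -> R) (rho : Z -> R) : Prop :=
  forall j : Z,
    C2_on01 (v j) (v' j) (v'' j) /\
    (forall x, 0 < x < 1 -> d * v'' j x = 0) /\
    0 = f (rho j) + alpha * (v j 0 + v (j - 1)%Z 1) - 2 * beta * rho j /\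
    - d * v' j 0 + alpha * v j 0 = beta * rho j /\
    d * v' j 1 + alpha * v j 1 = beta * rho (j + 1)%Z.

Definition nonneg_bounded (v : Z -> R -> R) (rho : Z -> R) : Prop :=
  (forall j x, 0 <= x <= 1 -> 0 <= v j x) /\ (forall j, 0 <= rho j) /\
  exists M, forall j x, 0 <= x <= 1 -> Rabs (v j x) <= M /\ Rabs (rho j) <= M.

(* Main.v *)
Require Import Defs.
From Stdlib Require Import Reals ZArith Lra Lia Psatz.
Open Scope R_scope.
From Stdlib Require Import Reals ZArith Lra Lia Psatz.

Lemma deriv_interior g g' x : deriv_on01 g g' -> 0 < x < 1 ->
  derivable_pt_lim g x (g' x).
Proof.
  intros H hx eps heps.
  destruct (H x ltac:(lra) eps heps) as [del [hdel Hd]].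
  assert (hp : 0 < Rmin del (Rmin x (1 - x))).
  { apply Rmin_glb_lt; [lra|apply Rmin_glb_lt; lra]. }
  exists (mkposreal _ hp). simpl. intros h hh0 hh.
  pose proof (Rmin_l del (Rmin x (1-x))).
  pose proof (Rmin_r del (Rmin x (1-x))).
  pose proof (Rmin_l x (1-x)). pose proof (Rmin_r x (1-x)).
  apply Rabs_def2 in hh as [h1 h2].
  specialize (Hd (x + h)). replace (x + h - x) with h in Hd by ring.
  apply Hd.
  - lra.
  - intro; apply hh0; lra.
  - apply Rabs_def1; lra.
Qed.

Lemma interior_affine g g' c : deriv_on01 g g' ->
  (forall x, 0 < x < 1 -> g' x = c) ->
  forall x, 0 < x < 1 -> g x = g (1/2) + c * (x - 1/2).
Proof.
  intros H Hc x hx.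
  assert (K : forall a b, 0 < a < b -> b < 1 -> g b - g a = c * (b - a)).
  { intros a b hab hb.
    destruct (MVT_cor2 g g' a b ltac:(lra)) as [z [hz1 hz2]].
    - intros z hz. apply deriv_interior; auto; lra.
    - rewrite hz1, Hc by lra. ring. }
  destruct (Rtotal_order x (1/2)) as [h|[h|h]].
  - pose proof (K x (1/2) ltac:(lra) ltac:(lra)). lra.
  - subst. ring.
  - pose proof (K (1/2) x ltac:(lra) ltac:(lra)). lra.
Qed.

Lemma deriv_cont g g' p : deriv_on01 g g' -> 0 <= p <= 1 ->
  forall eps, 0 < eps -> exists delta, 0 < delta /\
    forall y, 0 <= y <= 1 -> Rabs (y - p) < delta -> Rabs (g y - g p) < eps.
Proof.
  intros H hp eps heps.
  destruct (H p hp 1 ltac:(lra)) as [del [hdel Hd]].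
  set (K := Rabs (g' p) + 1).
  assert (hK : 0 < K) by (unfold K; pose proof (Rabs_pos (g' p)); lra).
  exists (Rmin del (eps / K)). split.
  { apply Rmin_glb_lt; [lra| apply Rdiv_lt_0_compat; lra]. }
  intros y hy hyp.
  destruct (Req_dec y p) as [e|ne].
  { subst. replace (g p - g p) with 0 by ring. rewrite Rabs_R0. lra. }
  pose proof (Rmin_l del (eps/K)). pose proof (Rmin_r del (eps/K)).
  specialize (Hd y hy ne ltac:(lra)).
  assert (hq : Rabs ((g y - g p) / (y - p)) < K).
  { unfold K.
    replace ((g y - g p) / (y - p)) with (((g y - g p) / (y - p) - g' p) + g' p) by ring.
    pose proof (Rabs_triang ((g y - g p) / (y - p) - g' p) (g' p)). lra. }
  replace (g y - g p) with ((g y - g p) / (y - p) * (y - p)) by (field; lra).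
  rewrite Rabs_mult.
  assert (hyp0 : 0 < Rabs (y - p)) by (apply Rabs_pos_lt; lra).
  apply Rle_lt_trans with (K * Rabs (y - p)).
  { apply Rmult_le_compat_r; lra. }
  assert (K * Rabs (y - p) < K * (eps / K)) by (apply Rmult_lt_compat_l; lra).
  replace (K * (eps / K)) with eps in H2 by (field; lra). lra.
Qed.

Lemma small_zero X : (forall e, 0 < e -> Rabs X < e) -> X = 0.
Proof.
  intros H. destruct (Req_dec X 0) as [|n]; auto.
  pose proof (Rabs_pos_lt X n). specialize (H _ H0). lra.
Qed.

Lemma affine_on g g' c : deriv_on01 g g' ->
  (forall x, 0 < x < 1 -> g' x = c) ->
  forall x, 0 <= x <= 1 -> g x = g (1/2) + c * (x - 1/2).
Proof.
  intros H Hc p hp.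
  pose proof (interior_affine g g' c H Hc) as Hi.
  apply Rminus_diag_uniq. apply small_zero. intros e he.
  set (K := Rabs c + 1).
  assert (hK : 0 < K) by (unfold K; pose proof (Rabs_pos c); lra).
  destruct (deriv_cont g g' p H hp (e/2) ltac:(lra)) as [del [hdel Hd]].
  set (t := Rmin 1 (Rmin del (e / K))).
  assert (ht : 0 < t).
  { unfold t. apply Rmin_glb_lt; [lra|apply Rmin_glb_lt; [lra|apply Rdiv_lt_0_compat; lra]]. }
  pose proof (Rmin_l 1 (Rmin del (e / K))). pose proof (Rmin_r 1 (Rmin del (e / K))).
  pose proof (Rmin_l del (e / K)). pose proof (Rmin_r del (e / K)).
  fold t in H0, H1.
  set (y := p - t * (p - 1/2)).
  assert (0 <= p * (1 - t)) by (apply Rmult_le_pos; lra).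
  assert (p * (1 - t) <= 1 - t) by (assert (p * (1-t) <= 1 * (1-t)) by (apply Rmult_le_compat_r; lra); lra).
  assert (hy : 0 < y < 1) by (unfold y; lra).
  assert (hyp : Rabs (y - p) <= t / 2).
  { unfold y. replace (p - t * (p - 1/2) - p) with (t * (1/2 - p)) by ring.
    rewrite Rabs_mult, Rabs_pos_eq by lra.
    assert (Rabs (1/2 - p) <= 1/2) by (apply Rabs_le; lra). nra. }
  specialize (Hd y ltac:(lra) ltac:(lra)).
  rewrite (Hi y hy) in Hd.
  replace (g p - (g (1 / 2) + c * (p - 1 / 2))) with
    (- (g (1 / 2) + c * (y - 1 / 2) - g p) + c * (y - p)) by ring.
  eapply Rle_lt_trans. apply Rabs_triang. rewrite Rabs_Ropp, Rabs_mult.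
  assert (Rabs c * Rabs (y - p) <= e / 2).
  { assert (Rabs c * Rabs (y - p) <= K * (t/2)).
    { unfold K. pose proof (Rabs_pos c). pose proof (Rabs_pos (y - p)). nra. }
    assert (HH : K * t <= K * (e / K)). { apply Rmult_le_compat_l. lra. exact (Rle_trans _ _ _ H1 H3). }
    replace (K * (e / K)) with e in HH by (field; apply Rgt_not_eq; exact hK).
    assert (K * (t/2) = (K * t) / 2) by field. lra. }
  lra.
Qed.

Lemma v_affine d g g' g'' : 0 < d -> C2_on01 g g' g'' ->
  (forall x, 0 < x < 1 -> d * g'' x = 0) ->
  g' 0 = g 1 - g 0 /\ g' 1 = g 1 - g 0 /\
  forall x, 0 <= x <= 1 -> g x = g 0 + (g 1 - g 0) * x.
Proof.
  intros hd [D1 [D2 _]] Hz.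
  assert (H1 : forall x, 0 <= x <= 1 -> g' x = g' (1/2) + 0 * (x - 1/2)).
  { apply (affine_on g' g'' 0 D2). intros x hx. specialize (Hz x hx).
    apply Rmult_integral in Hz as [|]; auto; lra. }
  set (A := g' (1/2)) in *.
  assert (H2 : forall x, 0 <= x <= 1 -> g x = g (1/2) + A * (x - 1/2)).
  { apply (affine_on g g' A D1). intros x hx. rewrite H1 by lra. ring. }
  pose proof (H1 0 ltac:(lra)). pose proof (H1 1 ltac:(lra)).
  pose proof (H2 0 ltac:(lra)). pose proof (H2 1 ltac:(lra)).
  split; [lra|split; [lra|]].
  intros x hx. rewrite (H2 x hx). rewrite H3, H4. ring.
Qed.

Lemma idx j n : (j + Z.of_nat (S n) = (j + Z.of_nat n) + 1)%Z.
Proof. lia. Qed.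

Lemma grow (r : Z -> R) M :
  (forall i, 1 < r i -> 2 * r i < r (i + 1)%Z + r (i - 1)%Z) ->
  (forall i, r i <= M) ->
  forall j, 1 < r j -> r j < r (j + 1)%Z -> False.
Proof.
  intros Hc HM j h1 h2.
  set (D := r (j + 1)%Z - r j).
  assert (P : forall n : nat, D <= r (j + Z.of_nat n + 1)%Z - r (j + Z.of_nat n)%Z
                 /\ r j + INR n * D <= r (j + Z.of_nat n)%Z).
  { induction n as [|n [IH1 IH2]].
    - simpl. rewrite Z.add_0_r. unfold D. lra.
    - rewrite idx, S_INR.
      set (k := (j + Z.of_nat n)%Z) in *.
      assert (r j + (INR n + 1) * D <= r (k + 1)%Z) by lra.
      split; [|lra].
      assert (HD : 0 < D) by (unfold D; lra).
      assert (0 <= INR n) by apply pos_INR.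
      assert (1 < r (k+1)%Z) by nra.
      specialize (Hc (k + 1)%Z H1).
      replace (k + 1 - 1)%Z with k in Hc by lia. lra. }
  assert (HD : 0 < D) by (unfold D; lra).
  destruct (INR_unbounded ((M - r j) / D)) as [n hn].
  destruct (P n) as [_ h].
  specialize (HM (j + Z.of_nat n)%Z).
  assert (INR n * D > (M - r j) / D * D) by (apply Rmult_gt_compat_r; lra).
  replace ((M - r j) / D * D) with (M - r j) in H by (field; lra). lra.
Qed.

Lemma shrink (r : Z -> R) :
  (forall i, r (i + 1)%Z + r (i - 1)%Z <= 2 * r i) ->
  (forall i, 0 <= r i) ->
  forall j, r (j + 1)%Z < r j -> False.
Proof.
  intros Hc H0 j h2.
  set (D := r j - r (j + 1)%Z).
  assert (P : forall n : nat, D <= r (j + Z.of_nat n)%Z - r (j + Z.of_nat n + 1)%Z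
                 /\ r (j + Z.of_nat n)%Z <= r j - INR n * D).
  { induction n as [|n [IH1 IH2]].
    - simpl. rewrite Z.add_0_r. unfold D. lra.
    - rewrite idx, S_INR.
      set (k := (j + Z.of_nat n)%Z) in *.
      specialize (Hc (k + 1)%Z).
      replace (k + 1 - 1)%Z with k in Hc by lia. lra. }
  assert (HD : 0 < D) by (unfold D; lra).
  destruct (INR_unbounded (r j / D)) as [n hn].
  destruct (P n) as [_ h].
  specialize (H0 (j + Z.of_nat n)%Z).
  assert (INR n * D > r j / D * D) by (apply Rmult_gt_compat_r; lra).
  replace (r j / D * D) with (r j) in H by (field; lra). lra.
Qed.

Lemma discrete (r : Z -> R) (f : R -> R) k M : 0 < k ->
  f 0 = 0 -> f 1 = 0 -> (forall u, 0 < u < 1 -> 0 < f u) ->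
  (forall u, (u < 0 \/ 1 < u) -> f u < 0) ->
  (forall i, f (r i) = k * (2 * r i - r (i + 1)%Z - r (i - 1)%Z)) ->
  (forall i, 0 <= r i) -> (forall i, r i <= M) ->
  (forall i, r i = 0) \/ (forall i, r i = 1).
Proof.
  intros hk f0 f1 fpos fneg E Hpos HM.
  assert (Hcv : forall r : Z -> R, (forall i, f (r i) = k * (2 * r i - r (i + 1)%Z - r (i - 1)%Z)) ->
     forall i, 1 < r i -> 2 * r i < r (i + 1)%Z + r (i - 1)%Z).
  { clear -hk fneg. intros r E i h. specialize (fneg (r i) (or_intror h)).
    rewrite E in fneg. nra. }
  assert (Er : forall i, f ((fun i => r (- i)%Z) i) = k * (2 * (fun i => r (- i)%Z) i
     - (fun i => r (- i)%Z) (i + 1)%Z - (fun i => r (- i)%Z) (i - 1)%Z)).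
  { intros i. simpl. rewrite E. replace (- i + 1)%Z with (- (i - 1))%Z by lia.
    replace (- i - 1)%Z with (- (i + 1))%Z by lia. ring. }
  assert (Hle1 : forall i, r i <= 1).
  { intros i. destruct (Rle_or_lt (r i) 1) as [|h]; auto. exfalso.
    pose proof (Hcv r E i h) as hc.
    destruct (Rlt_or_le (r i) (r (i + 1)%Z)) as [h2|h2].
    - exact (grow r M (Hcv r E) HM i h h2).
    - apply (grow (fun i => r (- i)%Z) M (Hcv _ Er) (fun i => HM _) (- i)%Z);
        simpl; rewrite ?Z.opp_involutive; auto.
      replace (- i + 1)%Z with (- (i - 1))%Z by lia. rewrite Z.opp_involutive. lra. }
  assert (Hcc : forall i, 0 <= f (r i)).
  { intros i. destruct (Hpos i) as [h|h]; [destruct (Hle1 i) as [h'|h']|].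
    - apply Rlt_le, fpos; lra.
    - rewrite h', f1; lra.
    - rewrite <- h, f0; lra. }
  assert (Hc1 : forall i, r (i + 1)%Z + r (i - 1)%Z <= 2 * r i).
  { intros i. specialize (Hcc i). rewrite E in Hcc. nra. }
  assert (Hc2 : forall i, (fun i => r (- i)%Z) (i + 1)%Z + (fun i => r (- i)%Z) (i - 1)%Z
        <= 2 * (fun i => r (- i)%Z) i).
  { intros i. simpl. specialize (Hc1 (- i)%Z).
    replace (- i + 1)%Z with (- (i - 1))%Z in Hc1 by lia.
    replace (- i - 1)%Z with (- (i + 1))%Z in Hc1 by lia. lra. }
  assert (Hst : forall i, r (i + 1)%Z = r i).
  { intros i. destruct (Rtotal_order (r (i + 1)%Z) (r i)) as [h|[h|h]]; auto; exfalso.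
    - exact (shrink r Hc1 Hpos i h).
    - apply (shrink _ Hc2 (fun i => Hpos _) (- i - 1)%Z). cbv beta.
      replace (- (- i - 1 + 1))%Z with i by lia.
      replace (- (- i - 1))%Z with (i + 1)%Z by lia. lra. }
  assert (Hconst : forall i, r i = r 0%Z).
  { apply Z.peano_ind; auto.
    - intros x h. rewrite <- h, <- Z.add_1_r. apply Hst.
    - intros x h. rewrite <- h. rewrite <- (Hst (Z.pred x)).
      f_equal. lia. }
  assert (Ef : f (r 0%Z) = 0).
  { rewrite E, (Hconst (0 + 1)%Z), (Hconst (0 - 1)%Z). ring. }
  destruct (Hpos 0%Z) as [h|h].
  - destruct (Hle1 0%Z) as [h'|h'].
    + specialize (fpos (r 0%Z) (conj h h')). lra.
    + right. intros i. rewrite Hconst. auto.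
  - left. intros i. rewrite Hconst. auto.
Qed.

Theorem theorem3p1 (alpha beta d : R) (f f' : R -> R)
  (v v' v'' : Z -> R -> R) (rho : Z -> R) :
  0 < alpha -> 0 < beta -> 0 < d ->
  admissible_f f f' ->
  stationary_solution f alpha beta d v v' v'' rho ->
  nonneg_bounded v rho ->
  (forall j : Z, (forall x, 0 <= x <= 1 -> v j x = 0) /\ rho j = 0) \/
  (forall j : Z, (forall x, 0 <= x <= 1 -> v j x = beta / alpha) /\ rho j = 1).
Proof.
  intros ha hb hd [_ [f0 [f1 [fpos [_ fneg]]]]] S [_ [Hpos [M HM]]].
  assert (Aff : forall j, v' j 0 = v j 1 - v j 0 /\ v' j 1 = v j 1 - v j 0 /\
     forall x, 0 <= x <= 1 -> v j x = v j 0 + (v j 1 - v j 0) * x).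
  { intros j. destruct (S j) as [C [Z _]]. exact (v_affine d _ _ _ hd C Z). }
  assert (Ha : forall j, v j 0 = beta * ((alpha + d) * rho j + d * rho (j + 1)%Z) / (alpha * (alpha + 2 * d))).
  { intros j. destruct (S j) as [_ [_ [_ [E2 E3]]]]. destruct (Aff j) as [s0 [s1 _]].
    rewrite s0 in E2. rewrite s1 in E3.
    assert (K : alpha * (alpha + 2 * d) * v j 0 = (alpha + d) * (- d * (v j 1 - v j 0) + alpha * v j 0)
       + d * (d * (v j 1 - v j 0) + alpha * v j 1)) by ring.
    rewrite E2, E3 in K.
    apply (Rmult_eq_reg_l (alpha * (alpha + 2 * d))).
    - rewrite K. field. split; intro; nra.
    - intro; nra. }
  assert (Hc : forall j, v j 1 = beta * (d * rho j + (alpha + d) * rho (j + 1)%Z) / (alpha * (alpha + 2 * d))).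
  { intros j. destruct (S j) as [_ [_ [_ [E2 E3]]]]. destruct (Aff j) as [s0 [s1 _]].
    rewrite s0 in E2. rewrite s1 in E3.
    assert (K : alpha * (alpha + 2 * d) * v j 1 = d * (- d * (v j 1 - v j 0) + alpha * v j 0)
       + (alpha + d) * (d * (v j 1 - v j 0) + alpha * v j 1)) by ring.
    rewrite E2, E3 in K.
    apply (Rmult_eq_reg_l (alpha * (alpha + 2 * d))).
    - rewrite K. field. split; intro; nra.
    - intro; nra. }
  assert (E : forall i, f (rho i) = (beta * d / (alpha + 2 * d)) * (2 * rho i - rho (i + 1)%Z - rho (i - 1)%Z)).
  { intros i. destruct (S i) as [_ [_ [E1 _]]].
    assert (Ef : f (rho i) = 2 * beta * rho i - alpha * (v i 0 + v (i - 1)%Z 1)) by lra.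
    rewrite Ef, Ha, Hc. replace (i - 1 + 1)%Z with i by lia. field. split; intro; nra. }
  assert (hk : 0 < beta * d / (alpha + 2 * d)).
  { apply Rdiv_lt_0_compat; nra. }
  assert (HM' : forall i, rho i <= M).
  { intros i. destruct (HM i 0 ltac:(lra)) as [_ h]. pose proof (Rle_abs (rho i)). lra. }
  destruct (discrete rho f _ M hk f0 f1 (fun u h => proj1 (fpos u h)) fneg E Hpos HM') as [Z|O].
  - left. intros j. split; [|apply Z]. intros x hx.
    destruct (Aff j) as [_ [_ Hx]]. rewrite Hx by auto.
    rewrite Ha, Hc, !Z. field. split; intro; nra.
  - right. intros j. split; [|apply O]. intros x hx.
    destruct (Aff j) as [_ [_ Hx]]. rewrite Hx by auto.
    rewrite Ha, Hc, !O. field. split; intro; nra.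
Qed.
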